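(* Let $\pi_1, \ldots, \pi_k \geqslant 3$ be pairwise distinct integers. Then $\prod_{i=1}^k (2^{\pi_i}-2) \geqslant \frac{1}{2} \prod_{i=1}^k 2^{\pi_i}$. *)

(* Defs.v *)
From mathcomp Require Import all_boot all_order all_algebra.

(* Main.v *)
Require Import Defs.
From mathcomp Require Import all_boot all_order all_algebra.
From mathcomp Require Import ring lra.
Import Order.TTheory GRing.Theory Num.Theory.
Local Open Scope ring_scope.

Definition tt_ (p : nat) : rat := 1 - 2 * (1/2) ^+ p.

Lemma half_pow_le (m : nat) : (1 <= m)%N -> 2 * (1/2 : rat) ^+ m <= 1.
Proof.
case: m => // m _; rewrite exprS mulrA mul1r divff // mul1r.
by apply: exprn_ile1; rewrite ?invr_ge0 ?invf_le1 // ler1n.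
Qed.

Lemma keyL (n : nat) : forall (m : nat) (s : seq nat), (1 <= m)%N -> uniq s ->
  all (fun p => (m <= p < m + n)%N) s ->
  1 - 4 * (1/2 : rat) ^+ m <= \prod_(p <- s) tt_ p.
Proof.
elim: n => [|n IH] m s Hm Hu Ha.
  case: s Ha Hu => [|a s] /=; last by rewrite addn0; case/andP=> /andP[H1 H2]; by move: (leq_ltn_trans H1 H2); rewrite ltnn.
  move=> _ _; rewrite big_nil lerBlDr lerDl.
  by apply: mulr_ge0 => //; apply: exprn_ge0.
have Hm1 : (1 <= m.+1)%N by [].
have E4 : 1 - 4 * (1/2 : rat) ^+ m <= 1 - 2 * (1/2) ^+ m.
  have : 0 < (1/2 : rat) ^+ m by apply: exprn_gt0.
  move=> H; lra.
have E2 : 1 - 4 * (1/2 : rat) ^+ m.+1 = 1 - 2 * (1/2) ^+ m.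
  by rewrite exprS mulrA; congr (_ - _ * _); rewrite -[4]/(2*2:rat) -mulrA mulfV // mulr1.
case: (boolP (m \in s)) => Hin.
  rewrite (perm_big _ (perm_to_rem Hin)) big_cons.
  have Hr : 1 - 4 * (1/2 : rat) ^+ m.+1 <= \prod_(p <- rem m s) tt_ p.
    apply: IH => //; first exact: rem_uniq.
    apply/allP => x Hx.
    have Hxs : x \in s by apply: (mem_rem Hx).
    move/allP: Ha => /(_ x Hxs) /andP[H1 H2].
    have Hxm : x != m.
      by move: Hx; rewrite (rem_filter _ Hu) mem_filter => /andP[].
    apply/andP; split; first by rewrite ltn_neqAle eq_sym Hxm H1.
    by rewrite addSnnS.
  rewrite E2 in Hr.
  have Ht : 0 <= tt_ m by rewrite /tt_ subr_ge0 half_pow_le.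
  apply: le_trans (ler_wpM2l Ht Hr).
  rewrite /tt_.
  set a := (1/2 : rat) ^+ m.
  have : 0 <= a ^+ 2 by apply: sqr_ge0.
  move=> H; rewrite -subr_ge0.
  have -> : (1 - 2 * a) * (1 - 2 * a) - (1 - 4 * a) = 4 * a ^+ 2.
    by rewrite expr2; rewrite -[4]/(2*2:rat); ring.
  by apply: mulr_ge0.
apply: le_trans E4 _; rewrite -E2.
apply: IH => //.
apply/allP => x Hx.
move/allP: Ha => /(_ x Hx) /andP[H1 H2].
have Hxm : x != m by apply: contraNneq Hin => <-.
apply/andP; split; first by rewrite ltn_neqAle eq_sym Hxm H1.
by rewrite addSnnS.
Qed.

Theorem lemma7 (s : seq nat) (Hs : uniq s) (H3 : all (fun p => 3 <= p)%N s) :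
  (\prod_(p <- s) (2 ^+ p - 2) : rat) >= (1 / 2) * \prod_(p <- s) (2 ^+ p).
Proof.
have Hb : (1/2 : rat) <= \prod_(p <- s) tt_ p.
  have -> : (1/2 : rat) = 1 - 4 * (1/2) ^+ 3.
    by rewrite -[4]/(2*2:rat); field.
  apply: (keyL (\max_(p <- s) p).+1) => //.
  apply/allP => x Hx; move/allP: H3 => /(_ x Hx) ->/=.
  rewrite ltn_addl // ltnS; exact: leq_bigmax_seq.
have -> : \prod_(p <- s) (2 ^+ p - 2) = \prod_(p <- s) (2 ^+ p * tt_ p :> rat).
  apply: eq_bigr => p _; rewrite /tt_ mulrBr mulr1 mulrCA -exprMn mul1r divff //.
  by rewrite expr1n mulr1.
rewrite big_split /= [X in _ <= X]mulrC.
apply: ler_wpM2r => //.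
by apply: prodr_ge0 => i _; apply: exprn_ge0.
Qed.
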